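(* Let $X$ be a countably infinite set and let $M_{2^{\aleph_0}}$ be the lattice consisting of an antichain of cardinality $2^{\aleph_0}$ together with a smallest and a largest element. Then there exists an injective order-preserving map $M_{2^{\aleph_0}}\to\mathrm{Cl}_{loc}(X)$ which preserves (binary) joins, and there exists an injective order-preserving map $M_{2^{\aleph_0}}\to\mathrm{Cl}_{loc}(X)$ which preserves (binary) meets.
   Context: A clone on $X$ is a set of finitary operations $X^n\to X$ ($n\ge1$) containing all projections $\pi^n_k(x_1,\dots,x_n)=x_k$ and closed under composition. Giving $X$ the discrete topology and $X^{X^n}$ the product topology, a clone is local if for each $n$ its set of $n$-ary operations is closed in $X^{X^n}$; equivalently, an $n$-ary operation $g$ belongs to the clone whenever for every finite $B\subseteq X^n$ some $n$-ary operation of the clone agrees with $g$ on $B$. $\mathrm{Cl}_{loc}(X)$ is the complete lattice of local clones on $X$ ordered by inclusion (meet is intersection, join is the smallest local clone containing the union). *)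

(* Defs.v *)
From mathcomp Require Import all_boot.
From Stdlib Require List.
Set Implicit Arguments. Unset Strict Implicit. Unset Printing Implicit Defensive.

(** An (n+1)-ary operation on X : X^(n+1) -> X (arities are >= 1). *)
Definition op (X : Type) (n : nat) := ('I_n.+1 -> X) -> X.

Definition opset (X : Type) := forall n : nat, op X n -> Prop.

Definition opset_sub X (C D : opset X) : Prop := forall n f, C n f -> D n f.
Definition opset_eq X (C D : opset X) : Prop := forall n f, C n f <-> D n f.

Definition is_clone X (C : opset X) : Prop :=
  (forall n (k : 'I_n.+1), C n (fun x => x k)) /\
  (forall n m (f : op X n) (gs : 'I_n.+1 -> op X m),
      C n f -> (forall i, C m (gs i)) -> C m (fun x => f (fun i => gs i x))).

Definition is_local X (C : opset X) : Prop :=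
  forall n (g : op X n),
    (forall B : seq ('I_n.+1 -> X),
        exists f, C n f /\ forall t, List.In t B -> f t = g t) ->
    C n g.

Definition local_clone X (C : opset X) : Prop := is_clone C /\ is_local C.

Definition loc_meet X (C D : opset X) : opset X := fun n f => C n f /\ D n f.
Definition loc_join X (C D : opset X) : opset X :=
  fun n f => forall E : opset X, local_clone E ->
    opset_sub C E -> opset_sub D E -> E n f.

(** The lattice M_{2^aleph0}: antichain indexed by nat -> bool (cardinality
    2^aleph0) with bottom and top. *)
Inductive Mc : Type := Mbot | Mtop | Matom of (nat -> bool).

Definition Mle (a b : Mc) : Prop := a = Mbot \/ b = Mtop \/ a = b.

Definition Mlub (a b c : Mc) : Prop :=
  Mle a c /\ Mle b c /\ forall d, Mle a d -> Mle b d -> Mle c d.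
Definition Mglb (a b c : Mc) : Prop :=
  Mle c a /\ Mle c b /\ forall d, Mle d a -> Mle d b -> Mle d c.

Definition countably_infinite (X : Type) : Prop :=
  exists e : nat -> X, bijective e.

(* Main.v *)
Require Import Defs.
From mathcomp Require Import all_boot.
From Stdlib Require List.
From Stdlib Require Import Classical FunctionalExtensionality.

Set Implicit Arguments. Unset Strict Implicit. Unset Printing Implicit Defensive.

Lemma loc_ext X (E : opset X) n (f h : op X n) :
  is_local E -> E n f -> (forall x, f x = h x) -> E n h.
Proof. move=> HL Ef Efh; apply: HL => B; exists f; split=> // t _. Qed.

Definition Pat (s : nat -> bool) (n : nat) : bool :=
  match n with 0 => true | 1 => false | m.+2 => s m end.

Definition Pol X (A : X -> bool) : opset X :=
  fun n f => forall t, (forall i, A (t i)) -> A (f t).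
Definition Cons X : opset X := fun n f => forall t, exists i, f t = t i.
Definition Tot X : opset X := fun n f => True.
Arguments Pol {X} A n f. Arguments Cons {X} n f. Arguments Tot {X} n f.

Lemma Pol_lc X (A : X -> bool) : local_clone (Pol A).
Proof.
split; [split|].
- by move=> n k t.
- move=> n m f gs Hf Hg t Ht; apply: Hf => i; exact: Hg.
- move=> n h Hh t Ht. have [f [Hf Hft]] := Hh [:: t].
  rewrite -Hft; [exact: Hf | by left].
Qed.

Lemma Cons_lc X : local_clone (@Cons X).
Proof.
split; [split|].
- by move=> n k t; exists k.
- move=> n m f gs Hf Hg t. have [i ->] := Hf (fun i => gs i t). exact: Hg.
- move=> n h Hh t. have [f [Hf Hft]] := Hh [:: t].
  rewrite -Hft; [exact: Hf | by left].
Qed.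

Lemma Tot_lc X : local_clone (@Tot X).
Proof. by split; [split|]. Qed.

Lemma join_key X (e : nat -> X) (g : X -> nat) (ge : cancel e g) (s t : nat -> bool) m
  (E : opset X) : local_clone E -> s m = true -> t m = false ->
  opset_sub (Pol (fun x => Pat s (g x))) E -> opset_sub (Pol (fun x => Pat t (g x))) E ->
  forall n h, E n h.
Proof.
move=> [[Hp Hc] HL] sm tm Hs Ht n h.
pose a := e m.+2.
pose gs : 'I_n.+2 -> op X n := fun i x => match unlift ord_max i with Some j => x j | None => a end.
pose H : op X n.+1 := fun y => if g (y ord_max) == m.+2 then h (fun j => y (lift ord_max j)) else e 0.
have EH : E n.+1 H.
  apply: Ht => y Hy. rewrite /H. case: eqP => Hg.
  - have := Hy ord_max. by rewrite Hg /= tm.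
  - by rewrite ge.
have Egs : forall i, E n (gs i).
  move=> i; rewrite /gs; case: (unlift ord_max i) => [j|].
  - exact: Hp.
  - apply: Hs => y Hy. by rewrite /a ge /= sm.
apply: (loc_ext HL (Hc _ _ _ _ EH Egs)) => x.
rewrite /H /gs unlift_none /a ge eqxx. congr h.
apply: functional_extensionality => j; by rewrite liftK.
Qed.

Lemma distinct_bits (s t : nat -> bool) : s <> t -> exists m, s m <> t m.
Proof.
move=> H; apply: NNPP => H'; apply: H; apply: functional_extensionality => m.
apply: NNPP => Hm; apply: H'; by exists m.
Qed.

Lemma constPol X (A : X -> bool) c a0 : A a0 -> (Pol A 0 (fun _ => c) <-> A c).
Proof. move=> H0; split. by move/(_ (fun _ => a0)); apply. by move=> Hc t _. Qed.

Lemma constCons X (c d : X) : c <> d -> ~ Cons 0 (fun _ => c).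
Proof. move=> Hcd /(_ (fun _ => d)) [i Hi]; exact: Hcd. Qed.

Lemma Mle_refl a : Mle a a. Proof. by right; right. Qed.
Lemma Mle_topl c : Mle Mtop c -> c = Mtop. Proof. by case=> [|[]]. Qed.
Lemma Mle_botr c : Mle c Mbot -> c = Mbot. Proof. by case=> [|[]]. Qed.

Lemma lub_cases a b c : Mlub a b c ->
  Mle c a \/ Mle c b \/ exists s t, a = Matom s /\ b = Matom t /\ s <> t.
Proof.
move=> [Hac [Hbc Hmin]]; case: a Hac Hmin => [| |s] Hac Hmin.
- right; left; apply: Hmin; [by left | exact: Mle_refl].
- by left; rewrite (Mle_topl Hac); exact: Mle_refl.
- case: b Hbc Hmin => [| |t] Hbc Hmin.
  + left; apply: Hmin; [exact: Mle_refl | by left].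
  + by right; left; rewrite (Mle_topl Hbc); exact: Mle_refl.
  + case: (classic (s = t)) => [Est|Hst].
    * subst t; left; apply: Hmin; exact: Mle_refl.
    * by right; right; exists s, t.
Qed.

Lemma glb_cases a b c : Mglb a b c ->
  Mle a c \/ Mle b c \/ exists s t, a = Matom s /\ b = Matom t /\ s <> t.
Proof.
move=> [Hca [Hcb Hmax]]; case: a Hca Hmax => [| |s] Hca Hmax.
- by left; rewrite (Mle_botr Hca); exact: Mle_refl.
- right; left; apply: Hmax; [by right; left | exact: Mle_refl].
- case: b Hcb Hmax => [| |t] Hcb Hmax.
  + by right; left; rewrite (Mle_botr Hcb); exact: Mle_refl.
  + left; apply: Hmax; [exact: Mle_refl | by right; left].
  + case: (classic (s = t)) => [Est|Hst].
    * subst t; left; apply: Hmax; exact: Mle_refl.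
    * by right; right; exists s, t.
Qed.
Definition Fmap X (g : X -> nat) (a : Mc) : opset X :=
  match a with Mbot => @Cons X | Mtop => @Tot X
  | Matom s => Pol (fun x => Pat s (g x)) end.

Lemma Fpart X (e : nat -> X) (g : X -> nat) (ge : cancel e g) :
  exists F : Mc -> opset X,
      (forall a, local_clone (F a)) /\
      (forall a b, opset_eq (F a) (F b) -> a = b) /\
      (forall a b, Mle a b -> opset_sub (F a) (F b)) /\
      (forall a b c, Mlub a b c -> opset_eq (F c) (loc_join (F a) (F b))).
Proof.
have e01 : e 0 <> e 1 by move=> /(congr1 g); rewrite !ge.
have e10 : e 1 <> e 0 by move=> H; apply: e01.
have A0 : forall s, Pat s (g (e 0)) by move=> s; rewrite ge.
have A1 : forall s, ~~ Pat s (g (e 1)) by move=> s; rewrite ge.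
have cP : forall s c, Pol (fun x => Pat s (g x)) 0 (fun _ => c) <-> Pat s (g c).
  by move=> s c; exact: (@constPol X (fun x => Pat s (g x)) c (e 0) (A0 s)).
have lc : forall a, local_clone (Fmap g a).
  by case=> [| |s] /=; [exact: Cons_lc | exact: Tot_lc | exact: Pol_lc].
have mono : forall a b, Mle a b -> opset_sub (Fmap g a) (Fmap g b).
  move=> a b [->|[->|->]] n f //.
  case: b => [| |s] //= Hf t Ht. by have [i ->] := Hf t.
exists (Fmap g); split; [exact: lc|split; [|split; [exact: mono|]]].
- move=> [| |s] [| |t] //= Heq.
  + exfalso; exact: (constCons e01 (proj2 (Heq 0 (fun _ => e 0)) I)).
  + exfalso; have := proj2 (Heq 0 (fun _ => e 0)). rewrite (cP t) => /(_ (A0 t)).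
    exact: constCons e01.
  + exfalso; exact: (constCons e01 (proj1 (Heq 0 (fun _ => e 0)) I)).
  + exfalso; have := proj1 (Heq 0 (fun _ => e 1)) I. rewrite (cP t).
    by move/negP: (A1 t).
  + exfalso; have := proj1 (Heq 0 (fun _ => e 0)). rewrite (cP s) => /(_ (A0 s)).
    exact: constCons e01.
  + exfalso; have := proj2 (Heq 0 (fun _ => e 1)) I. rewrite (cP s).
    by move/negP: (A1 s).
  + congr Matom; apply: functional_extensionality => m.
    have := Heq 0 (fun _ => e m.+2).
    rewrite (cP s) (cP t) !ge /=.
    case: (s m); case: (t m) => //= [] [H1 H2]; [by have := H1 erefl | by have := H2 erefl].
- move=> a b c Hl; have Hl' := Hl; move: Hl' => [Hac [Hbc _]] n f; split.
  + move=> Hf E HE HaE HbE.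
    case: (lub_cases Hl) => [Hca|[Hcb|[s [t [Ea [Eb Hst]]]]]]; try subst a b.
    * exact/HaE/(mono _ _ Hca).
    * exact/HbE/(mono _ _ Hcb).
    * have [m Hm] := distinct_bits Hst.
      case Esm: (s m) Hm; case Etm: (t m) => // _.
      -- exact: (join_key ge HE Esm Etm HaE HbE).
      -- exact: (join_key ge HE Etm Esm HbE HaE).
  + move=> Hj; apply: Hj; [exact: lc | exact: mono | exact: mono].
Qed.
Definition Un X (L : seq (X -> X)) : opset X :=
  fun n f => exists k v, List.In v L /\ forall t, f t = v (t k).
Arguments Un {X} L n f.

Lemma finB X n (g : op X n) (P : seq ('I_n.+1 * (X -> X))) :
  (forall p, List.In p P -> exists t, g t <> p.2 (t p.1)) ->
  exists B : seq ('I_n.+1 -> X), forall p, List.In p P ->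
     exists t, List.In t B /\ g t <> p.2 (t p.1).
Proof.
elim: P => [|p P IH] H. by exists [::].
have [t Ht] := H p (or_introl erefl).
have [B HB] := IH (fun q Hq => H q (or_intror Hq)).
exists (t :: B) => q [<-|Hq]. by exists t; split => //; left.
have [t' [H1 H2]] := HB q Hq. by exists t'; split => //; right.
Qed.

Lemma In_mem (T : eqType) (x : T) (s : seq T) : x \in s -> List.In x s.
Proof.
elim: s => [|y s IH] //=. rewrite inE => /orP [/eqP ->|H]; [by left | by right; apply: IH].
Qed.

Lemma Un_local X (L : seq (X -> X)) : is_local (Un L).
Proof.
move=> n g Hg. apply: NNPP => Hn.
have H : forall p, List.In p (List.list_prod (enum 'I_n.+1) L) -> exists t, g t <> p.2 (t p.1).
  move=> [k v] Hp. apply: NNPP => H1. apply: Hn. exists k, v. split.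
  - by have [] := proj1 (List.in_prod_iff _ _ _ _) Hp.
  - move=> t; apply: NNPP => Ht; apply: H1; by exists t.
have [B HB] := finB H.
have [f [[k [v [Hv Hf]]] Hfg]] := Hg B.
have Hp : List.In (k, v) (List.list_prod (enum 'I_n.+1) L).
  apply/List.in_prod_iff; split => //. apply: In_mem; by rewrite mem_enum.
have [t [Ht Hne]] := HB _ Hp. apply: Hne => /=. by rewrite -Hfg // Hf.
Qed.

Lemma Un_clone X (L : seq (X -> X)) : List.In (fun x => x) L ->
  (forall v w, List.In v L -> List.In w L -> exists z, List.In z L /\ forall x, v (w x) = z x) ->
  is_clone (Un L).
Proof.
move=> Hid Hcomp; split.
- move=> n k; exists k, (fun x => x); by split.
- move=> n m f gs [k [v [Hv Hf]]] Hg.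
  have [j [w [Hw Hgk]]] := Hg k.
  have [z [Hz Hvw]] := Hcomp v w Hv Hw.
  exists j, z; split => // x. by rewrite Hf /= Hgk Hvw.
Qed.

Definition uu X (e : nat -> X) (g : X -> nat) (s : nat -> bool) (x : X) : X :=
  match g x with 2 => e 0 | m.+3 => if s m then e 0 else x | _ => x end.

Lemma uu_e X (e : nat -> X) g s n : cancel e g ->
  uu e g s (e n) = match n with 2 => e 0 | m.+3 => if s m then e 0 else e n | _ => e n end.
Proof. by move=> ge; rewrite /uu ge. Qed.

Lemma uu_idem X (e : nat -> X) g s x : cancel e g -> uu e g s (uu e g s x) = uu e g s x.
Proof.
move=> ge. rewrite {2 3}/uu. case E: (g x) => [|[|[|m]]].
- by rewrite /uu E.
- by rewrite /uu E.
- by rewrite uu_e.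
- case Es: (s m); first by rewrite uu_e.
  by rewrite /uu E Es.
Qed.
Definition Gmap X (e : nat -> X) (g : X -> nat) (a : Mc) : opset X :=
  match a with Mbot => Un [:: fun x => x] | Mtop => @Tot X
  | Matom s => Un [:: (fun x => x); uu e g s] end.

Lemma Gpart X (e : nat -> X) (g : X -> nat) (ge : cancel e g) :
  exists G : Mc -> opset X,
      (forall a, local_clone (G a)) /\
      (forall a b, opset_eq (G a) (G b) -> a = b) /\
      (forall a b, Mle a b -> opset_sub (G a) (G b)) /\
      (forall a b c, Mglb a b c -> opset_eq (G c) (loc_meet (G a) (G b))).
Proof.
have eN : forall n m, e n = e m -> n = m by move=> n m /(congr1 g); rewrite !ge.
have u0 : forall s, uu e g s (e 0) = e 0 by move=> s; rewrite uu_e.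
have u1 : forall s, uu e g s (e 1) = e 1 by move=> s; rewrite uu_e.
have u2 : forall s, uu e g s (e 2) = e 0 by move=> s; rewrite uu_e.
have u3 : forall s m, uu e g s (e m.+3) = if s m then e 0 else e m.+3
  by move=> s m; rewrite uu_e.
have lc : forall a, local_clone (Gmap e g a).
  case=> [| |s] /=; [split | exact: Tot_lc | split].
  - apply: Un_clone; first by left.
    by move=> v w [<-|[]] [<-|[]]; exists (fun x => x); split => //; left.
  - exact: Un_local.
  - apply: Un_clone; first by left.
    move=> v w [<-|[<-|[]]] [<-|[<-|[]]].
    + by exists (fun x => x); split => //; left.
    + by exists (uu e g s); split => //; right; left.
    + by exists (uu e g s); split => //; right; left.
    + exists (uu e g s); split; [by right; left | by move=> x; rewrite uu_idem].
  - exact: Un_local.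
have mono : forall a b, Mle a b -> opset_sub (Gmap e g a) (Gmap e g b).
  move=> a b [->|[->|->]] n f //.
  case: b => [| |s] //= [k [v [[<-|[]] Hf]]].
  by exists k, (fun x => x); split => //; left.
have inter : forall s t n f, s <> t -> Un [:: (fun x => x); uu e g s] n f ->
    Un [:: (fun x => x); uu e g t] n f -> Un [:: fun x => x] n f.
  move=> s t n f Hst [k [v [Hv Hf]]] [k' [w [Hw Hf']]].
  case: Hv => [Ev|[Ev|[]]]; subst v.
    by exists k, (fun x => x); split => //; left.
  case: Hw => [Ew|[Ew|[]]]; subst w.
    by exists k', (fun x => x); split => //; left.
  exfalso. have [m Hm] := distinct_bits Hst.
  case: (eqVneq k k') => [Ekk|Nkk].
  - subst k'. have := Hf (fun _ => e m.+3). rewrite Hf' !u3.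
    case: (s m) Hm; case: (t m) => //= _ /eN //.
  - pose tt := fun i => if i == k then e 1 else e 0.
    have Nkk' : k' != k by rewrite eq_sym.
    have := Hf tt. rewrite Hf' /tt eqxx (negbTE (Nkk' : k' != k)) u0 u1.
    by move/eN.
exists (Gmap e g); split; [exact: lc|split; [|split; [exact: mono|]]].
- have c0 : forall s, ~ Un [:: (fun x => x); uu e g s] 0 (fun _ => e 0).
    move=> s [k [v [Hv Hf]]]. have := Hf (fun _ => e 1).
    by case: Hv => [<-|[<-|[]]]; rewrite ?u1 => /eN.
  have c0' : ~ Un [:: (fun x => x)] 0 (fun _ => e 0).
    move=> [k [v [Hv Hf]]]. have := Hf (fun _ => e 1).
    by case: Hv => [<-|[]] => /eN.
  have U1 : forall s, Un [:: (fun x => x); uu e g s] 0 (fun t => uu e g s (t ord0)).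
    by move=> s; exists ord0, (uu e g s); split => //; right; left.
  have U2 : forall s, ~ Un [:: (fun x => x)] 0 (fun t => uu e g s (t ord0)).
    move=> s [k [v [Hv Hf]]]. have := Hf (fun _ => e 2).
    by case: Hv => [<-|[]]; rewrite u2 => /eN.
  have U3 : forall (s t : nat -> bool) m, s m -> Un [:: (fun x => x); uu e g t] 0 (fun y => uu e g s (y ord0)) -> t m.
    move=> s t m Hsm [k [v [Hv Hf]]]. have := Hf (fun _ => e m.+3).
    rewrite u3 Hsm. case: Hv => [<-|[<-|[]]]; first by move/eN.
    rewrite u3. by case: (t m) => // /eN.
  move=> [| |s] [| |t] //= Heq.
  + exfalso; exact: c0' (proj2 (Heq 0 (fun _ => e 0)) I).
  + exfalso; exact: U2 (proj2 (Heq 0 _) (U1 t)).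
  + exfalso; exact: c0' (proj1 (Heq 0 (fun _ => e 0)) I).
  + exfalso; exact: c0 (proj1 (Heq 0 (fun _ => e 0)) I).
  + exfalso; exact: U2 (proj1 (Heq 0 _) (U1 s)).
  + exfalso; exact: c0 (proj2 (Heq 0 (fun _ => e 0)) I).
  + congr Matom; apply: functional_extensionality => m.
    have H1 := U3 s t m; have H2 := U3 t s m.
    have K1 := proj1 (Heq 0 _) (U1 s); have K2 := proj2 (Heq 0 _) (U1 t).
    case Es: (s m) H1 H2; case Et: (t m) => // H1 H2.
    - by have := H1 erefl K1.
    - by have := H2 erefl K2.
- move=> a b c Hg; have Hg' := Hg; move: Hg' => [Hca [Hcb _]] n f; split.
  + by move=> Hf; split; [exact: (mono _ _ Hca) | exact: (mono _ _ Hcb)].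
  + move=> [Ha Hb].
    case: (glb_cases Hg) => [Hac|[Hbc|[s [t [Ea [Eb Hst]]]]]]; try subst a b.
    * exact: (mono _ _ Hac).
    * exact: (mono _ _ Hbc).
    * apply: (mono Mbot); first by left.
      exact: (inter s t n f Hst Ha Hb).
Qed.

Theorem proposition2p11 (X : Type) (hX : countably_infinite X) :
  (exists F : Mc -> opset X,
      (forall a, local_clone (F a)) /\
      (forall a b, opset_eq (F a) (F b) -> a = b) /\
      (forall a b, Mle a b -> opset_sub (F a) (F b)) /\
      (forall a b c, Mlub a b c -> opset_eq (F c) (loc_join (F a) (F b))))
  /\
  (exists G : Mc -> opset X,
      (forall a, local_clone (G a)) /\
      (forall a b, opset_eq (G a) (G b) -> a = b) /\
      (forall a b, Mle a b -> opset_sub (G a) (G b)) /\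
      (forall a b c, Mglb a b c -> opset_eq (G c) (loc_meet (G a) (G b)))).
Proof.
have [e [g ge _]] := hX.
split; [exact: (Fpart ge) | exact: (Gpart ge)].
Qed.
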